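(* Let $f:\{0,1\}^n\to\{0,1\}$ be a non-constant zebra function with $\operatorname{alt}(f)=k$ for some $k\ge1$. Then \[C(f)\le O\!\left(\operatorname{alt}(f)\max\{\mathsf N(f)^2,\mathsf N(\overline f)^2\}\right).\]
   Context: $\mathsf N(f)$ is the minimum degree of a real polynomial $p$ with $|p(x)|\le1/3$ whenever $f(x)=0$ and $|p(x)|\ge1$ whenever $f(x)=1$; $\overline f=1-f$. A monotone path is a sequence $x^{(1)},\dots,x^{(m)}\in\{0,1\}^n$ where each $x^{(i+1)}$ is obtained from $x^{(i)}$ by changing exactly one coordinate from $0$ to $1$. Its alternation number (w.r.t. $f$) is the number of $i$ with $f(x^{(i)})\ne f(x^{(i+1)})$. $\operatorname{alt}(f)$ is the maximum alternation number over monotone paths from $0^n$ to $1^n$. $f$ is a zebra function if all monotone paths from $0^n$ to $1^n$ have the same alternation number. $C(f)$ is the certificate complexity of $f$. Constants in $O(\cdot)$ are absolute. *)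

(* Defs.v *)
From HB Require Import structures.
From mathcomp Require Import all_boot all_order all_algebra.
From mathcomp Require Import boolp reals.
From mathcomp Require Import mpoly.
Set Implicit Arguments. Unset Strict Implicit. Unset Printing Implicit Defensive.
Import Order.TTheory GRing.Theory Num.Theory.
Local Open Scope ring_scope.

Definition cube (n : nat) := {ffun 'I_n -> bool}.

Definition negf (n : nat) (f : cube n -> bool) : cube n -> bool := fun x => ~~ f x.

Definition toR (R : realType) (n : nat) (x : cube n) : 'I_n -> R :=
  fun i => (x i)%:R.

(** p is a real polynomial of degree <= d (msize p = 1 + deg p, 0 for p = 0)
    with |p x| <= 1/3 when f x = 0 and |p x| >= 1 when f x = 1. *)
Definition Nwitness (R : realType) (n : nat) (f : cube n -> bool) (d : nat) : Prop :=
  exists p : {mpoly R[n]}, (msize p <= d.+1)%N /\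
    (forall x : cube n, f x = false -> `| p.@[toR R x] | <= 3^-1) /\
    (forall x : cube n, f x = true -> 1 <= `| p.@[toR R x] |).

(** N(f): the minimum such degree. Such a polynomial of degree <= n always
    exists, so the minimum lies in [0, n]; n is only the (unused) default. *)
Definition Ndeg (R : realType) (n : nat) (f : cube n -> bool) : nat :=
  \big[minn/n]_(d < n.+1 | `[< Nwitness R f d >]) (d : nat).

Definition is_cert (n : nat) (f : cube n -> bool) (x : cube n) (S : {set 'I_n}) : bool :=
  [forall y : cube n, [forall i in S, y i == x i] ==> (f y == f x)].

Definition certx (n : nat) (f : cube n -> bool) (x : cube n) : nat :=
  \big[minn/n]_(S : {set 'I_n} | is_cert f x S) #|S|.

Definition certC (n : nat) (f : cube n -> bool) : nat :=
  \max_(x : cube n) certx f x.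

Definition mstep (n : nat) (x y : cube n) : bool :=
  [exists i : 'I_n, [&& x i == false, y i == true &
                       [forall j : 'I_n, (j != i) ==> (y j == x j)]]].

Definition zeros (n : nat) : cube n := [ffun=> false].
Definition ones (n : nat) : cube n := [ffun=> true].

Definition mpath01 (n : nat) (s : seq (cube n)) : Prop :=
  exists s' : seq (cube n), s = zeros n :: s' /\
    path (@mstep n) (zeros n) s' /\ last (zeros n) s' = ones n.

Definition altnum (n : nat) (f : cube n -> bool) (s : seq (cube n)) : nat :=
  count (fun xy : cube n * cube n => f xy.1 != f xy.2) (zip s (behead s)).

(** alt(f): maximum over monotone paths from 0^n to 1^n. Every such path has
    exactly n+1 points, so the maximum is taken over (n+1)-tuples. *)
Definition alt (n : nat) (f : cube n -> bool) : nat :=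
  \max_(t : (n.+1).-tuple (cube n) | `[< mpath01 (tval t) >]) altnum f t.

Definition zebra (n : nat) (f : cube n -> bool) : Prop :=
  forall s t : seq (cube n), mpath01 s -> mpath01 t -> altnum f s = altnum f t.

Definition nonconstant (n : nat) (f : cube n -> bool) : Prop :=
  exists x y : cube n, f x != f y.

(* Main.v *)
Require Import Defs.
From HB Require Import structures.
From mathcomp Require Import all_boot all_order all_algebra.
From mathcomp Require Import boolp reals.
From mathcomp Require Import mpoly.
From mathcomp Require Import zify ring lra.
Set Implicit Arguments. Unset Strict Implicit. Unset Printing Implicit Defensive.
Import Order.TTheory GRing.Theory Num.Theory.

Lemma bigmin_le_seq (I : eqType) (s : seq I) (P : pred I) (F : I -> nat) m j :
  j \in s -> P j -> \big[minn/m]_(i <- s | P i) F i <= F j.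
Proof.
elim: s => [|x s IH] //; rewrite in_cons big_cons => /orP[/eqP <-|js] Pj.
  by rewrite Pj geq_minl.
case: (P x); last exact: IH.
by apply: leq_trans (geq_minr _ _) (IH js Pj).
Qed.

Lemma bigmin_le (I : finType) (P : pred I) (F : I -> nat) m j :
  P j -> \big[minn/m]_(i | P i) F i <= F j.
Proof. by move=> Pj; apply: bigmin_le_seq => //; rewrite mem_index_enum. Qed.

Section Walk.
Variable n : nat.
Implicit Types (x y : cube n) (s : seq 'I_n).

Definition upd x i : cube n := [ffun j => (j == i) || x j].
Definition walk x s := scanl upd x s.
Definition onesl x := [seq i <- enum 'I_n | x i].
Definition zerosl x := [seq i <- enum 'I_n | ~~ x i].

Lemma foldl_upd x s j : (foldl upd x s) j = x j || (j \in s).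
Proof.
elim: s x => [|i s IH] x /=; first by rewrite orbF.
rewrite IH ffunE in_cons.
by case: (j == i); case: (x j); case: (j \in s).
Qed.

Lemma last_walk x s : last x (walk x s) = foldl upd x s.
Proof. by elim: s x => [|i s IH] x //=. Qed.

Lemma mstep_upd x i : x i = false -> mstep x (upd x i).
Proof.
move=> xi; apply/existsP; exists i; apply/and3P; split.
- by rewrite xi.
- by rewrite ffunE eqxx.
by apply/forallP => j; apply/implyP => ji; rewrite ffunE (negbTE ji).
Qed.

Lemma path_walk x s : uniq s -> all (fun i => ~~ x i) s ->
  path (@mstep n) x (walk x s).
Proof.
elim: s x => [|i s IH] x //= /andP[nis us] /andP[xi al].
rewrite mstep_upd ?(negbTE xi) //=; apply: IH => //.
apply/allP => j js; rewrite ffunE negb_or (allP al j js) andbT.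
by apply: contraNneq nis => <-.
Qed.

Lemma last_to x : last (zeros n) (walk (zeros n) (onesl x)) = x.
Proof.
rewrite last_walk; apply/ffunP => j.
by rewrite foldl_upd ffunE /= mem_filter mem_enum andbT.
Qed.

Lemma last_from x : last x (walk x (zerosl x)) = ones n.
Proof.
rewrite last_walk; apply/ffunP => j.
by rewrite foldl_upd ffunE /= mem_filter mem_enum andbT; case: (x j).
Qed.

Lemma uniq_onesl x : uniq (onesl x).
Proof. exact: filter_uniq (enum_uniq _). Qed.
Lemma uniq_zerosl x : uniq (zerosl x).
Proof. exact: filter_uniq (enum_uniq _). Qed.
Lemma all_onesl x : all (fun i => ~~ zeros n i) (onesl x).
Proof. by apply/allP => i _; rewrite ffunE. Qed.
Lemma all_zerosl x : all (fun i => ~~ x i) (zerosl x).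
Proof. by apply/allP => i; rewrite mem_filter => /andP[]. Qed.

Lemma altnum_cons2 (f : cube n -> bool) a b t :
  altnum f [:: a, b & t] = (f a != f b) + altnum f (b :: t).
Proof. by []. Qed.

Lemma altnum_cat (f : cube n -> bool) a t1 t2 :
  altnum f (a :: t1 ++ t2) = altnum f (a :: t1) + altnum f (last a t1 :: t2).
Proof.
elim: t1 a => [|b t1 IH] a /=; first by [].
by rewrite altnum_cons2 IH altnum_cons2 addnA.
Qed.

Lemma altnum_last (f : cube n -> bool) a t :
  f (last a t) = f a (+) odd (altnum f (a :: t)).
Proof.
elim: t a => [|b t IH] a /=; first by rewrite addbF.
rewrite IH altnum_cons2 oddD.
by case: (f a); case: (f b); case: (odd _).
Qed.

Definition cle x y := [forall i, x i ==> y i].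

Section Zebra.
Variable f : cube n -> bool.
Hypothesis zf : zebra f.

Definition hh x := altnum f (zeros n :: walk (zeros n) (onesl x)).
Definition tl x := altnum f (x :: walk x (zerosl x)).

Lemma mpA x : mpath01 (zeros n :: walk (zeros n) (onesl x) ++ walk x (zerosl x)).
Proof.
exists (walk (zeros n) (onesl x) ++ walk x (zerosl x)); split => //; split.
  by rewrite cat_path path_walk ?uniq_onesl ?all_onesl // last_to
    path_walk ?uniq_zerosl ?all_zerosl.
by rewrite last_cat last_to last_from.
Qed.

Lemma mpB x i : x i = false -> mpath01 (zeros n :: walk (zeros n) (onesl x) ++
   upd x i :: walk (upd x i) (zerosl (upd x i))).
Proof.
move=> xi.
exists (walk (zeros n) (onesl x) ++ upd x i :: walk (upd x i) (zerosl (upd x i))).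
split => //; split.
  rewrite cat_path path_walk ?uniq_onesl ?all_onesl // last_to /=.
  by rewrite mstep_upd // path_walk ?uniq_zerosl ?all_zerosl.
by rewrite last_cat last_to /= last_from.
Qed.

Lemma step x i : x i = false -> hh (upd x i) = hh x + (f x != f (upd x i)).
Proof.
move=> xi; have e := zf (mpB xi) (mpA (upd x i)).
rewrite !altnum_cat !last_to altnum_cons2 in e.
rewrite /hh; lia.
Qed.

Lemma hh0 : hh (zeros n) = 0.
Proof.
rewrite /hh /onesl (@eq_filter _ _ pred0) ?filter_pred0 // => i.
by rewrite ffunE.
Qed.

Lemma parity x : f x = f (zeros n) (+) odd (hh x).
Proof. by rewrite -{1}(last_to x) altnum_last. Qed.

Lemma hh_le_alt x : hh x <= alt f.
Proof.
have sz : size (zeros n :: walk (zeros n) (onesl x) ++ walk x (zerosl x)) == n.+1.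
  rewrite /= size_cat !size_scanl !size_filter.
  have := count_predC (fun i => x i) (enum 'I_n).
  by rewrite size_enum_ord => ->.
have := @leq_bigmax_cond _ (fun t : (n.+1).-tuple (cube n) => `[< mpath01 (tval t) >])
   (fun t => altnum f t) (Tuple sz) (asboolT (mpA x)).
rewrite /alt /= altnum_cat last_to; apply: leq_trans; exact: leq_addr.
Qed.

Lemma hh_foldl x s : uniq s -> all (fun i => ~~ x i) s -> hh x <= hh (foldl upd x s).
Proof.
elim: s x => [|i s IH] x //= /andP[nis us] /andP[xi al].
apply: leq_trans (IH _ us _).
  by rewrite step ?(negbTE xi) // leq_addr.
apply/allP => j js; rewrite ffunE negb_or (allP al j js) andbT.
by apply: contraNneq nis => <-.
Qed.

Lemma hM x y : cle x y -> hh x <= hh y.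
Proof.
move=> /forallP lxy.
have -> : y = foldl upd x [seq i <- enum 'I_n | y i && ~~ x i].
  apply/ffunP => j; rewrite foldl_upd mem_filter mem_enum andbT.
  by have := lxy j; case: (x j); case: (y j).
apply: hh_foldl; first exact: filter_uniq (enum_uniq _).
by apply/allP => i; rewrite mem_filter => /andP[/andP[]].
Qed.

End Zebra.


Definition wt (x : cube n) := #|[set i | x i]|.
Definition clr (u : cube n) i : cube n := [ffun j => (j != i) && u j].
Definition compl (u : cube n) : cube n := [ffun j => ~~ u j].

Lemma cle_refl x : cle x x.
Proof. by apply/forallP => i; apply/implyP. Qed.

Lemma cle_trans x y z : cle x y -> cle y z -> cle x z.
Proof.
move=> /forallP a /forallP b; apply/forallP => i; apply/implyP => xi.
by apply: (implyP (b i)); apply: (implyP (a i)).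
Qed.

Lemma cle_zeros x : cle (zeros n) x.
Proof. by apply/forallP => i; rewrite ffunE. Qed.

Lemma cle_ones x : cle x (ones n).
Proof. by apply/forallP => i; rewrite ffunE implybT. Qed.

Lemma cle_compl x y : cle x y -> cle (compl y) (compl x).
Proof.
move=> /forallP a; apply/forallP => i; rewrite !ffunE.
by have := a i; case: (x i); case: (y i).
Qed.

Lemma complK : involutive compl.
Proof. by move=> x; apply/ffunP => i; rewrite !ffunE negbK. Qed.

Lemma cle_wt x y : cle x y -> x != y -> wt x < wt y.
Proof.
move=> /forallP a nxy; apply: proper_card; rewrite properE; apply/andP; split.
  by apply/subsetP => i; rewrite !inE => xi; apply: (implyP (a i)).
apply/negP => /subsetP b; move/eqP: nxy; apply; apply/ffunP => i.
have := a i; have := b i; rewrite !inE.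
by case: (x i); case: (y i) => // /(_ isT).
Qed.

Section Comb.
Variable h : cube n -> nat.
Variable G : nat.
Hypothesis hM : forall x y, cle x y -> h x <= h y.
Hypothesis hU : forall x i, x i = false -> h (upd x i) <= (h x).+1.
Hypothesis h0 : h (zeros n) = 0.
Hypothesis hB : forall (u : cube n) (W : {set 'I_n}),
  (forall x : cube n, (forall i, i \notin W -> x i = u i) -> x != u -> (h x).+1 = h u) ->
  #|W| <= G.

Lemma down u : (forall v, cle v u -> v != u -> h v < h u) -> wt u <= h u * G.
Proof.
move: {2}(h u) (erefl (h u)) => c; elim: c u => [|c IH] u hu minu.
  case: (eqVneq u (zeros n)) => [->|nz].
    by rewrite /wt (@eq_finset _ _ pred0) ?cards0 // => i; rewrite ffunE.
  by move: (minu _ (cle_zeros u)); rewrite eq_sym nz h0 hu => /(_ isT).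
case: (pickP (fun i => u i)) => [i ui | none]; last first.
  have uz : u = zeros n by apply/ffunP => j; rewrite ffunE; exact: none j.
  by move: hu; rewrite uz h0.
set v := clr u i.
have lvu : cle v u by apply/forallP => j; rewrite ffunE; apply/implyP => /andP[].
have nvu : v != u.
  by apply/negP => /eqP e; move: ui; rewrite -e ffunE eqxx.
have uv : u = upd v i.
  apply/ffunP => j; rewrite !ffunE; case: (eqVneq j i) => [->|] //=.
have hv : h v = c.
  have := minu _ lvu nvu; have := hU (i := i) (x := v); rewrite -uv ffunE eqxx => /(_ erefl).
  lia.
have Zv : (fun w => cle w u && (h w == c)) v by rewrite lvu hv eqxx.
case: (@arg_minnP _ v (fun w => cle w u && (h w == c)) wt Zv) => z /andP[lzu /eqP hz] zmin.
have minz : forall w, cle w z -> w != z -> h w < h z.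
  move=> w lwz nwz; rewrite ltnNge; apply/negP => hzw.
  have hw : h w == c by rewrite eqn_leq -hz hzw andbT hM.
  have := zmin w; rewrite (cle_trans lwz lzu) hw => /(_ isT).
  by rewrite leqNgt cle_wt.
have IHz := IH z hz minz.
set W := [set j | u j && ~~ z j].
have bW : #|W| <= G.
  apply: hB => x xo nxu.
  have lzx : cle z x.
    apply/forallP => j; apply/implyP => zj.
    rewrite xo; first by apply: (implyP ((forallP lzu) j)).
    by rewrite inE zj andbF.
  have lxu : cle x u.
    apply/forallP => j; apply/implyP => xj.
    case: (boolP (j \in W)) => [|jW]; first by rewrite inE => /andP[].
    by rewrite -xo.
  have := minu _ lxu nxu; have := hM lzx; lia.
have wtu : wt u = wt z + #|W|.
  rewrite /wt -(cardsID [set j | z j] [set j | u j]); congr (_ + _).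
    apply: eq_card => j; rewrite !inE.
    by have := (forallP lzu) j; case: (z j); case: (u j).
  by apply: eq_card => j; rewrite !inE andbC.
by rewrite wtu hu mulSn; lia.
Qed.

End Comb.

Section Cert.
Variable f : cube n -> bool.
Hypothesis zf : zebra f.
Variable G : nat.
Hypothesis FB : forall (u : cube n) (W : {set 'I_n}),
  (forall x : cube n, (forall i, i \notin W -> x i = u i) -> x != u -> f x != f u) ->
  #|W| <= G.

Let H := hh f (ones n).
Let h' x := H - hh f (compl x).

Lemma hh_le_H x : hh f x <= H.
Proof. exact: (hM zf (cle_ones x)). Qed.

Lemma par_diff x u : (hh f x).+1 = hh f u -> f x != f u.
Proof. by move=> e; rewrite (parity f x) (parity f u) -e /=; case: (f _); case: (odd _). Qed.

Lemma cert_bound x0 : certx f x0 <= alt f * G.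
Proof.
have Yx0 : (fun v => cle v x0 && (hh f v == hh f x0)) x0 by rewrite cle_refl eqxx.
case: (@arg_minnP _ x0 (fun v => cle v x0 && (hh f v == hh f x0)) wt Yx0) => y /andP[lyx /eqP hy] ymin.
have wty : wt y <= hh f y * G.
  apply: (down (h := hh f)).
  - by move=> a b; apply: (hM zf).
  - by move=> a i ai; rewrite (step zf ai); case: (_ != _); rewrite ?addn1 ?addn0.
  - exact: hh0.
  - move=> u W Hb; apply: FB => x xo nxu; apply: par_diff; exact: Hb.
  - move=> w lwy nwy; rewrite ltnNge; apply/negP => hyw.
    have hw : hh f w == hh f x0 by rewrite -hy eqn_leq hyw andbT (hM zf).
    have := ymin w; rewrite (cle_trans lwy lyx) hw => /(_ isT).
    by rewrite leqNgt cle_wt.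
have Zx0 : (fun v => cle x0 v && (hh f v == hh f x0)) x0 by rewrite cle_refl eqxx.
case: (@arg_minnP _ x0 (fun v => cle x0 v && (hh f v == hh f x0)) (fun v => wt (compl v)) Zx0) => z /andP[lxz /eqP hz] zmin.
have wtz : wt (compl z) <= h' (compl z) * G.
  apply: (down (h := h')).
  - move=> a b lab; rewrite /h'; apply: leq_sub2l; apply: (hM zf); exact: cle_compl.
  - move=> a i ai; rewrite /h'.
    have e : compl a = upd (compl (upd a i)) i.
      apply/ffunP => j; rewrite !ffunE; case: (eqVneq j i) => [->|] //=.
      by rewrite ai.
    have ci : compl (upd a i) i = false by rewrite !ffunE eqxx.
    have := step zf ci; rewrite -e => st.
    have := hh_le_H (compl a); have := hh_le_H (compl (upd a i)).
    move: st; case: (_ != _) => /=; lia.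
  - by rewrite /h' (_ : compl (zeros n) = ones n) ?subnn //; apply/ffunP => j; rewrite !ffunE.
  - move=> u W Hb; apply: (FB (u := compl u)) => y1 yo nyu.
    have c := Hb (compl y1).
    move: c; rewrite /h' complK => c.
    have := hh_le_H y1; have := hh_le_H (compl u).
    move=> a b; rewrite eq_sym; apply: par_diff.
    have : H - hh f y1 + 1 = H - hh f (compl u).
      rewrite addn1; apply: c.
        by move=> i iW; rewrite ffunE yo // ffunE negbK.
      by apply: contra nyu => /eqP <-; rewrite complK.
    lia.
  - move=> w lwz nwz; rewrite /h' complK.
    have lzw : cle z (compl w) by rewrite -[z]complK; apply: cle_compl.
    have nzw : compl w != z by apply: contra nwz => /eqP <-; rewrite complK.
    have := hh_le_H (compl w); have := hM zf lzw.
    case: (eqVneq (hh f (compl w)) (hh f z)) => [e|ne]; last by lia.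
    have := zmin (compl w); rewrite (cle_trans lxz lzw) e hz eqxx complK => /(_ isT).
    by rewrite leqNgt cle_wt.
have hyx : hh f x0 <= H := hh_le_H x0.
set S := [set i | y i] :|: [set i | ~~ z i].
have cS : is_cert f x0 S.
  apply/forallP => w; apply/implyP => /forall_inP hw.
  have lyw : cle y w.
    apply/forallP => i; apply/implyP => yi.
    by rewrite (eqP (hw i _)) ?inE ?yi // (implyP ((forallP lyx) i)).
  have lwz : cle w z.
    apply/forallP => i; apply/implyP => wi; apply/negPn/negP => zi.
    have := hw i; rewrite !inE zi orbT => /(_ isT) /eqP e.
    have := (forallP lxz) i; rewrite -e wi /=; by move/negbTE: zi => ->.
  have := hM zf lyw; have := hM zf lwz; rewrite hy hz => a b.
  have e : hh f w = hh f x0 by apply/eqP; rewrite eqn_leq a b.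
  by rewrite (parity f w) (parity f x0) e.
have : certx f x0 <= #|S| by rewrite /certx; apply: bigmin_le.
move/leq_trans; apply.
apply: leq_trans (leq_card_setU _ _) _.
have -> : #|[set i | ~~ z i]| = wt (compl z).
  by apply: eq_card => i; rewrite !inE ffunE.
have : h' (compl z) = H - hh f x0 by rewrite /h' complK hz.
move=> e; rewrite e in wtz.
apply: leq_trans (leq_add wty wtz) _.
rewrite hy -mulnDl subnKC //.
by rewrite leq_mul2r hh_le_alt ?orbT.
Qed.

End Cert.
End Walk.

Definition dist (j i : nat) := ((j - i) + (i - j))%N.

Lemma fact_split (a b : nat) : (a + b)`! = a`! * \prod_(1 <= j < b.+1) (j + a).
Proof.
rewrite !fact_prod (big_cat_nat _ (n := a.+1)) //=; last by rewrite ltnS leq_addr.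
congr (_ * _).
rewrite -[a.+1]add1n (_ : (a + b).+1 = b.+1 + a)%N; last by rewrite addSn addnC.
by rewrite big_addn addnK.


Qed.

Lemma prod_skip (F : nat -> nat) i d : (0 < i <= d)%N ->
  \prod_(1 <= j < d.+1 | j != i) F j =
  (\prod_(1 <= j < i) F j * \prod_(i.+1 <= j < d.+1) F j)%N.
Proof.
move=> /andP[i0 id].
rewrite (big_cat_nat _ (n := i)) //=; last by rewrite ltnW.
congr (_ * _).
  rewrite big_nat_cond [RHS]big_nat_cond; apply: eq_bigl => j.
  by case: (ltnP j i) => ji; rewrite ?(ltn_eqF ji) ?andbF ?andbT.
have := @big_ltn_cond _ 1%N muln i d.+1 (fun j => j != i) F id.
move=> /= ->; rewrite eqxx /= big_nat_cond [RHS]big_nat_cond; apply: eq_bigl => j.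
by case: (ltnP i j) => ij; rewrite ?(gtn_eqF ij) ?andbT //= ltnNge ij.
Qed.

Lemma prodN i d : (0 < i <= d)%N ->
  ((\prod_(1 <= j < d.+1 | j != i) j) ^ 2 <=
   2 * (\prod_(1 <= j < d.+1 | j != i) dist j i) * \prod_(1 <= j < d.+1 | j != i) (j + i))%N.
Proof.
move=> hid; have /andP[i0 id] := hid.
set A := \prod_(1 <= j < d.+1 | j != i) j.
set B := \prod_(1 <= j < d.+1 | j != i) dist j i.
set C := \prod_(1 <= j < d.+1 | j != i) (j + i).
have mi : i \in index_iota 1 d.+1 by rewrite mem_index_iota i0 ltnS.
have ui : uniq (index_iota 1 d.+1) by exact: iota_uniq.
have hA : (i * A = d`!)%N by rewrite fact_prod (bigD1_seq i) //.
have hC : (2 * i * C * i`! = (d + i)`!)%N.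
  rewrite addnC fact_split (bigD1_seq i) //= -/C; ring.
have hB : B = ((i.-1)`! * (d - i)`!)%N.
  rewrite /B prod_skip //; congr (_ * _).
    rewrite (@eq_big_nat _ _ _ _ _ _ (fun j => i - j)%N); last first.
      by move=> j /andP[_ ji]; rewrite /dist (eqP (ltnW ji)) add0n.
    rewrite big_nat_rev /=.
    rewrite (@eq_big_nat _ _ _ _ _ _ (fun j => j)); last first.
      move=> j /andP[j1 ji]; rewrite add1n subSS subKn //; exact: ltnW.
    by rewrite -{1}(prednK i0) -fact_prod.
  rewrite (@eq_big_nat _ _ _ _ _ _ (fun j => j - i)%N); last first.
    by move=> j /andP[ij _]; rewrite /dist (eqP (ltnW ij)) addn0.
  rewrite -[i.+1]add1n big_addn fact_prod subSn //.
  by apply: eq_bigr => j _; rewrite addnK.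
have hf4 : (d`! ^ 2 <= (d - i)`! * (d + i)`!)%N.
  have e1 := fact_split (d - i) i; rewrite subnK // in e1.
  rewrite [X in (_ <= _ * X)%N]fact_split expnS expn1 {1}e1 -mulnA leq_pmul2l ?fact_gt0 //.
  rewrite [_ * d`!]mulnC leq_pmul2l ?fact_gt0 //.
  apply: leq_prod => j _; rewrite leq_add2l; exact: leq_subr.
have hfi : (i`! = i * (i.-1)`!)%N by rewrite -{1}(prednK i0) factS prednK.
have ip : (0 < i ^ 2)%N by rewrite expn_gt0 i0.
rewrite -(leq_pmul2l ip) -expnMn hA.
apply: (leq_trans hf4); rewrite -hC hfi hB.
rewrite leq_eqVlt; apply/orP; left; apply/eqP; ring.
Qed.

Section RB.
Variable R : realFieldType.
Local Open Scope ring_scope.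

Definition fr (a b : nat) : R := a%:R / b%:R.

Lemma fr_ge0 a b : 0 <= fr a b.
Proof. by rewrite /fr divr_ge0 ?ler0n. Qed.

Lemma fr_le a b c e : (0 < b)%N -> (0 < e)%N -> (a * e <= c * b)%N -> fr a b <= fr c e.
Proof.
move=> b0 e0 h; rewrite /fr ler_pdivrMr ?ltr0n // mulrAC ler_pdivlMr ?ltr0n //.
by rewrite -!natrM ler_nat.
Qed.

Lemma fr_leR a b c e : (0 < b)%N -> (0 < e)%N ->
  (a%:R * e%:R <= c%:R * b%:R :> R) -> fr a b <= fr c e.
Proof.
move=> b0 e0 h; rewrite /fr ler_pdivrMr ?ltr0n // mulrAC ler_pdivlMr ?ltr0n //.
Qed.

Lemma fr_eq a b c e : (0 < b)%N -> (0 < e)%N -> (a * e = c * b)%N -> fr a b = fr c e.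
Proof.
move=> b0 e0 h; rewrite /fr; apply/eqP; rewrite eqr_div ?pnatr_eq0 -?lt0n //.
by rewrite -!natrM h.
Qed.

Lemma fr_mul a b c e : fr a b * fr c e = fr (a * c) (b * e).
Proof. by rewrite /fr mulf_div -!natrM. Qed.

Lemma fr_prod (I : Type) (r : seq I) (P : pred I) (a b : I -> nat) :
  \prod_(j <- r | P j) fr (a j) (b j) = fr (\prod_(j <- r | P j) a j) (\prod_(j <- r | P j) b j).
Proof. by rewrite /fr !natr_prod -prodfV -big_split. Qed.

Lemma prod_c_bound d :
  \prod_(1 <= j < d.+1) fr (20 * j ^ 2 + 1) (20 * j ^ 2) <= fr (10 * d + 9) (9 * d + 9).
Proof.
elim: d => [|d IH].
  by rewrite big_geq // /fr divff // pnatr_eq0.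
rewrite big_nat_recr //=.
apply: le_trans (ler_wpM2r (fr_ge0 _ _) IH) _.
rewrite fr_mul; apply: fr_le; rewrite ?muln_gt0 ?expn_gt0 //.
  by apply/and4P; split; lia.
lia.
Qed.

Lemma fr_add a b c e : (0 < b)%N -> (0 < e)%N ->
  fr a b + fr c e = fr (a * e + c * b) (b * e).
Proof.
move=> b0 e0; rewrite /fr addf_div ?pnatr_eq0 -?lt0n //.
by rewrite -!natrM -natrD.
Qed.

Lemma sum_inv_sq d : \sum_(1 <= i < d.+1) fr 1 (i ^ 2) <= 2 - fr 2 d.+1.
Proof.
elim: d => [|d IH].
  by rewrite big_geq // /fr divr1 subrr.
rewrite big_nat_recr //=.
have h : fr 1 (d.+1 ^ 2) + fr 2 d.+2 <= fr 2 d.+1.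
  rewrite fr_add ?expn_gt0 //; apply: fr_le; rewrite ?muln_gt0 ?expn_gt0 //; lia.
lra.
Qed.

Definition tnd (k : nat) : R := (5 + 100 * k ^ 2)%N%:R.
Definition Fq (j i : nat) : R := tnd j / (tnd j - tnd i).

Lemma norm_natB (a b : nat) : `|a%:R - b%:R : R| = (dist a b)%:R.
Proof.
rewrite /dist; case: (leqP b a) => h.
  by rewrite -natrB // normr_nat (eqP h) addn0.
rewrite -opprB normrN -natrB ?(ltnW h) // normr_nat.
by rewrite (eqP (ltnW h)) add0n.
Qed.

Lemma dist_t j i : dist (5 + 100 * j ^ 2) (5 + 100 * i ^ 2) = (100 * (dist j i * (j + i)))%N.
Proof.
rewrite /dist !subnDl -!mulnBr; case: (leqP i j) => h.
  have a : (j - i + (i - j) = j - i)%N by rewrite (eqP h) addn0.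
  have b : (i ^ 2 - j ^ 2 = 0)%N by apply/eqP; rewrite subn_eq0 leq_exp2r.
  by rewrite b addn0 subn_sqr a.
have a : (j - i + (i - j) = i - j)%N by rewrite (eqP (ltnW h)) add0n.
have b : (j ^ 2 - i ^ 2 = 0)%N by apply/eqP; rewrite subn_eq0 leq_exp2r // ltnW.
by rewrite b add0n subn_sqr a addnC.
Qed.

Lemma absF j i : (0 < j)%N -> j != i ->
  `|Fq j i| = fr (20 * j ^ 2 + 1) (20 * j ^ 2) * fr (j ^ 2) (dist j i * (j + i)).
Proof.
move=> j0 ji.
have D0 : (0 < dist j i)%N by move: ji; rewrite /dist; case: (ltngtP j i) => //; lia.
rewrite /Fq normrM normfV /tnd norm_natB normr_nat dist_t fr_mul.
apply: fr_eq; rewrite ?muln_gt0 ?expn_gt0 ?D0 ?j0 ?addn_gt0 ?j0 //.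
set D := dist j i; set J := (j ^ 2)%N; lia.
Qed.

Lemma prod_other_bound i d : (0 < i <= d)%N ->
  \prod_(1 <= j < d.+1 | j != i) fr (j ^ 2) (dist j i * (j + i)) <= 2.
Proof.
move=> hid; have /andP[i0 id] := hid.
rewrite fr_prod.
have pos : (0 < \prod_(1 <= j < d.+1 | j != i) (dist j i * (j + i)))%N.
  apply: prodn_cond_gt0 => j ji; rewrite muln_gt0 addn_gt0 i0 orbT andbT.
  by move: ji; rewrite /dist; case: (ltngtP j i) => //; lia.
apply: le_trans (fr_le (c := 2) (e := 1) pos _ _) _ => //.
  rewrite muln1 [X in (_ <= 2 * X)%N]big_split /=.
  rewrite [X in (X <= _)%N](eq_bigr (fun j => j * j)%N); last by move=> j _; rewrite mulnn.
  rewrite [X in (X <= _)%N]big_split /= mulnn mulnA; exact: prodN.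
by rewrite /fr divr1.
Qed.

Lemma prod_a_bound i d : (0 < i <= d)%N ->
  \prod_(1 <= j < d.+1 | j != i) fr (20 * j ^ 2 + 1) (20 * j ^ 2) <= fr 10 9.
Proof.
move=> hid; have /andP[i0 id] := hid.
have mi : i \in index_iota 1 d.+1 by rewrite mem_index_iota i0 ltnS.
have full := prod_c_bound d.
rewrite (bigD1_seq i) ?iota_uniq //= in full.
have ai : 1 <= fr (20 * i ^ 2 + 1) (20 * i ^ 2).
  rewrite -[1](@divr1 R) -[1%R]/(1%:R).
  by apply: fr_le; rewrite ?muln_gt0 ?expn_gt0 ?i0 //; lia.
have p0 : 0 <= \prod_(1 <= j < d.+1 | j != i) fr (20 * j ^ 2 + 1) (20 * j ^ 2).
  by apply: prodr_ge0 => j _; exact: fr_ge0.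
apply: le_trans (ler_peMl p0 ai) _.
apply: le_trans full _; apply: fr_le => //; lia.
Qed.

Lemma absF0 i : (0 < i)%N -> `|Fq 0 i| = fr 1 (20 * i ^ 2).
Proof.
move=> i0; rewrite /Fq normrM normfV /tnd norm_natB normr_nat dist_t.
apply: fr_eq; rewrite ?muln_gt0 ?expn_gt0 ?i0 //=.
  by rewrite /dist; lia.
rewrite /dist; set J := (i ^ 2)%N; lia.
Qed.

Lemma term_bound i d : (0 < i <= d)%N ->
  `|\prod_(0 <= j < d.+1 | j != i) Fq j i| <= fr 1 (9 * i ^ 2).
Proof.
move=> hid; have /andP[i0 id] := hid.
rewrite normr_prod.
have := @big_ltn_cond _ 1 *%R 0 d.+1 (fun j => j != i) (fun j => `|Fq j i|) erefl.
move=> /= ->; rewrite eq_sym -lt0n i0 absF0 //.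
rewrite big_nat_cond (eq_bigr (fun j => fr (20 * j ^ 2 + 1) (20 * j ^ 2) * fr (j ^ 2) (dist j i * (j + i))));
  last by move=> j /andP[/andP[j0 _] ji]; rewrite absF.
rewrite -big_nat_cond big_split /=.
have p0a : 0 <= \prod_(1 <= j < d.+1 | j != i) fr (20 * j ^ 2 + 1) (20 * j ^ 2).
  by apply: prodr_ge0 => j _; exact: fr_ge0.
have p0b : 0 <= \prod_(1 <= j < d.+1 | j != i) fr (j ^ 2) (dist j i * (j + i)).
  by apply: prodr_ge0 => j _; exact: fr_ge0.
apply: le_trans (ler_wpM2l (fr_ge0 _ _) (ler_pM p0a p0b (prod_a_bound hid) (prod_other_bound hid))) _.
have -> : (2 : R) = fr 2 1 by rewrite /fr divr1.
rewrite !fr_mul; apply: fr_le; rewrite ?muln_gt0 ?expn_gt0 ?i0 //; lia.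
Qed.

Lemma sum_bound d :
  \sum_(0 <= i < d.+1) `|\prod_(0 <= j < d.+1 | j != i) Fq j i| <= fr 4 3.
Proof.
rewrite big_ltn //.
have g0 : `|\prod_(0 <= j < d.+1 | j != 0) Fq j 0| <= fr 10 9.
  rewrite normr_prod.
  have := @big_ltn_cond _ 1 *%R 0 d.+1 (fun j => j != 0) (fun j => `|Fq j 0|) erefl.
  move=> /= ->.
  rewrite big_nat_cond (eq_bigr (fun j => fr (20 * j ^ 2 + 1) (20 * j ^ 2))); last first.
    move=> j /andP[/andP[j0 _] _]; rewrite absF // ?(gtn_eqF j0) //.
    rewrite (_ : fr (j ^ 2) (dist j 0 * (j + 0)) = 1) ?mulr1 //.
    by rewrite /dist subn0 sub0n !addn0 mulnn /fr divff // pnatr_eq0 -lt0n expn_gt0 j0.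
  have -> : \prod_(1 <= i < d.+1 | (1 <= i < d.+1)%N && (i != 0)) fr (20 * i ^ 2 + 1) (20 * i ^ 2) =
            \prod_(1 <= i < d.+1) fr (20 * i ^ 2 + 1) (20 * i ^ 2).
    rewrite [RHS]big_nat_cond; apply: eq_bigl => j.
    by case: j => [|j] //=; rewrite andbT.
  apply: le_trans (prod_c_bound d) _; apply: fr_le => //; lia.
have g1 : \sum_(1 <= i < d.+1) `|\prod_(0 <= j < d.+1 | j != i) Fq j i| <=
          9%:R^-1 * \sum_(1 <= i < d.+1) fr 1 (i ^ 2).
  rewrite mulr_sumr; apply: ler_sum_nat => i /andP[i0 id].
  have hb : (0 < i <= d)%N by rewrite i0 -ltnS.
  apply: le_trans (term_bound hb) _.
  by rewrite /fr natrM invfM !mul1r.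
have g2 := sum_inv_sq d.
have g3 := fr_ge0 2 d.+1.
move: g0 g1 g2 g3; rewrite /fr.
set a := \sum_(1 <= i < d.+1) _; set b := \sum_(1 <= i < d.+1) _.
set c := `| _ |; set e := (2%:R / _).
lra.
Qed.

End RB.

Lemma size_prod_le (R : nzRingType) (I : Type) (r : seq I) (F : I -> {poly R}) (e : I -> nat) :
  (forall i, (size (F i) <= (e i).+1)%N) ->
  (size (\prod_(i <- r) F i)%R <= (\sum_(i <- r) e i).+1)%N.
Proof.
move=> hF; elim: r => [|a r IH]; first by rewrite !big_nil size_poly1.
rewrite !big_cons; apply: leq_trans (size_polyMleq _ _) _.
have := hF a; move: IH; lia.
Qed.

Section Block.
Variable R : realType.
Local Open Scope ring_scope.
Variables (n : nat) (g : cube n -> bool) (d : nat) (p : {mpoly R[n]}).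
Hypothesis hp : (msize p <= d.+1)%N.
Hypothesis hlo : forall x, g x = false -> `|p.@[toR R x]| <= 3^-1.
Variables (u : cube n) (W : {set 'I_n}).
Hypothesis hW : forall x : cube n, (forall i, i \notin W -> x i = u i) -> x != u -> g x = false.

Definition pi (q : R) (i : 'I_n) (b : bool) : R :=
  if i \in W then (if b == u i then 1 - q else q) else (b == u i)%:R.
Definition mu (q : R) (x : cube n) : R := \prod_i pi q i (x i).
Definition Psi (q : R) : R := \sum_(x : cube n) mu q x * p.@[toR R x].

Lemma sum_pi q i : \sum_b pi q i b = 1.
Proof.
rewrite big_bool /pi; case: (i \in W); case: (u i) => /=; rewrite ?subrK ?addr0 ?add0r //.
by rewrite addrC subrK.
Qed.

Lemma sum_mu q : \sum_(x : cube n) mu q x = 1.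
Proof.
rewrite /mu -bigA_distr_bigA /= big1 // => i _; exact: sum_pi.
Qed.

Lemma mu_ge0 q x : 0 <= q <= 1 -> 0 <= mu q x.
Proof.
move=> /andP[q0 q1]; apply: prodr_ge0 => i _; rewrite /pi.
by case: (i \in W); case: (_ == _); rewrite ?subr_ge0 ?ler0n.
Qed.

Lemma mu_u q : mu q u = (1 - q) ^+ #|W|.
Proof.
rewrite /mu (eq_bigr (fun i => if i \in W then 1 - q else 1)); last first.
  by move=> i _; rewrite /pi eqxx; case: (i \in W).
by rewrite -big_mkcond prodr_const.
Qed.

Lemma pi0 i b : b != u i -> pi 0 i b = 0.
Proof. by move=> /negbTE h; rewrite /pi h; case: (i \in W). Qed.

Lemma pi_out q i b : b != u i -> i \notin W -> pi q i b = 0.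
Proof. by move=> /negbTE h /negbTE iW; rewrite /pi h iW. Qed.

Lemma exists_diff (x : cube n) : x != u -> exists i, x i != u i.
Proof.
move=> nxu; apply/existsP; apply: contraNT nxu => /existsPn h.
by apply/eqP/ffunP => i; apply/eqP; exact: negbNE (h i).
Qed.

Lemma Psi0 : Psi 0 = p.@[toR R u].
Proof.
rewrite /Psi (bigD1 u) //= big1 ?addr0.
  by rewrite mu_u subr0 expr1n mul1r.
move=> x nxu; have [i hi] := exists_diff nxu.
by rewrite /mu (bigD1 i) //= pi0 // mul0r mul0r.
Qed.

Lemma Psi_near q : 0 <= q <= 1 ->
  `|Psi q - (1 - q) ^+ #|W| * p.@[toR R u]| <= 3^-1.
Proof.
move=> hq.
rewrite /Psi (bigD1 u) //= mu_u.
have -> : forall A S : R, A + S - A = S by move=> A S; rewrite addrAC subrr add0r.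
apply: le_trans (ler_norm_sum _ _ _) _.
have h1 : \sum_(x | x != u) mu q x <= 1.
  have := sum_mu q; rewrite (bigD1 u) //= => e.
  have := mu_ge0 u hq; move: e; set S := \sum_(x | _) _; lra.
apply: le_trans (_ : \sum_(x | x != u) mu q x * 3^-1 <= _).
  apply: ler_sum => x nxu; rewrite normrM ger0_norm ?mu_ge0 //.
  case: (boolP [forall i, (i \notin W) ==> (x i == u i)]) => [/forallP hx|].
    apply: ler_wpM2l; first exact: mu_ge0.
    apply: hlo; apply: hW => // i iW; exact/eqP/(implyP (hx i)).
  rewrite negb_forall => /existsP [i]; rewrite negb_imply => /andP[iW xi].
  by rewrite /mu (bigD1 i) //= pi_out // !mul0r.
rewrite -mulr_suml; have : 0 < 3^-1 :> R by rewrite invr_gt0 ltr0n.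
move: h1; set S := \sum_(x | _) _; nra.
Qed.

Definition Apoly (i : 'I_n) : {poly R} :=
  if i \in W then (if u i then 1 - 'X else 'X) else (u i)%:R%:P.
Definition Bpoly (m : 'X_{1..n}) : {poly R} := \prod_i (if m i == 0%N then 1 else Apoly i).
Definition Ppoly : {poly R} := \sum_(m <- msupp p) p@_m *: Bpoly m.

Lemma hornerA q i : (Apoly i).[q] = pi q i true.
Proof. by rewrite /Apoly /pi; case: (i \in W); case: (u i) => /=; rewrite !hornerE. Qed.

Lemma inner q i k : \sum_b pi q i b * (b%:R) ^+ k = (if k == 0%N then 1 else Apoly i).[q].
Proof.
rewrite big_bool /=; case: k => [|k] /=.
  by rewrite !expr0 !mulr1 hornerE -(sum_pi q i) big_bool.
by rewrite expr1n expr0n /= !mulr1 mulr0 addr0 hornerA.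
Qed.

Lemma Psi_P q : Psi q = Ppoly.[q].
Proof.
rewrite /Psi /Ppoly horner_sum.
under eq_bigr do rewrite mevalE mulr_sumr.
rewrite exchange_big /=; apply: eq_bigr => m _.
rewrite hornerZ /Bpoly horner_prod.
rewrite (eq_bigr (fun x : cube n => p@_m * \prod_i (pi q i (x i) * (x i)%:R ^+ m i))); last first.
  by move=> x _; rewrite mulrCA /mu -big_split /=.
rewrite -mulr_sumr; congr (_ * _).
rewrite -(@bigA_distr_bigA _ _ _ _ _ _ _ (fun i (b : bool) => pi q i b * (b%:R) ^+ m i)) /=.
apply: eq_bigr => i _; exact: inner.
Qed.

Lemma size_P : (size Ppoly <= d.+1)%N.
Proof.
rewrite /Ppoly big_seq; apply: (big_ind (fun P : {poly R} => (size P <= d.+1)%N)).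
- by rewrite size_poly0.
- move=> P Q hP hQ; apply: leq_trans (size_polyD _ _) _; by rewrite geq_max hP hQ.
move=> m hm; apply: leq_trans (size_scale_leq _ _) _.
apply: leq_trans (size_prod_le (e := fun i => nat_of_bool (m i != 0%N)) _ _) _.
  move=> i; case: (m i == 0%N) => /=; first by rewrite size_poly1.
  rewrite /Apoly; case: (i \in W); last exact: leq_trans (size_polyC_leq1 _) _.
  case: (u i); last by rewrite size_polyX.
  apply: leq_trans (size_polyD _ _) _; by rewrite size_polyN size_polyX size_poly1.
have := msize_mdeg_lt hm; rewrite mdegE => h.
have : (\sum_i nat_of_bool (m i != 0%N) <= \sum_i m i)%N.
  by apply: leq_sum => i _; case: (m i).
move=> hs; apply: leq_ltn_trans hs _; exact: leq_trans h hp.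
Qed.

Lemma bern (x : R) (k : nat) : 0 <= x <= 1 -> (1 - x) ^+ k * (1 + k%:R * x) <= 1.
Proof.
move=> /andP[x0 x1]; elim: k => [|k IH]; first by rewrite expr0 mul0r addr0 mulr1.
rewrite exprS -mulrA.
have y0 : 0 <= (1 - x) ^+ k by rewrite exprn_ge0 // subr_ge0.
set y := (1 - x) ^+ k in IH y0 *.
have h : 0 <= x ^+ 2 * (k.+1)%:R * y.
  by apply: mulr_ge0 => //; apply: mulr_ge0; [exact: sqr_ge0 | exact: ler0n].
rewrite -natr1 in h *; nra.
Qed.

Definition Lc (i : 'I_d.+1) : R := \prod_(j < d.+1 | (j : nat) != (i : nat)) Fq R j i.

Lemma block_bound : 1 <= `|p.@[toR R u]| -> (#|W| <= 4 + 100 * d ^ 2)%N.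
Proof.
move=> hi; rewrite leqNgt; apply/negP => big.
set m := #|W| in big.
have m0 : (0 < m)%N by lia.
have mR : (m%:R : R) != 0 by rewrite pnatr_eq0 -lt0n.
pose xs (k : nat) : R := tnd R k / m%:R.
have inj : injective xs.
  move=> a b; rewrite /xs => /(mulIf (invr_neq0 mR)) /eqP.
  rewrite /tnd eqr_nat eqn_add2l eqn_mul2l /= eqn_exp2r // => /eqP //.
have e0 : p.@[toR R u] = \sum_(i < d.+1) Psi (xs i) * Lc i.
  rewrite -Psi0 !Psi_P (lagrange_gen (ltn0Sn d) inj size_P) horner_sum.
  apply: eq_bigr => i _; rewrite hornerCM -Psi_P (lagrangeE (ltn0Sn d) inj) /= hornerCM.
  congr (_ * _); rewrite !horner_prod -prodfV -big_split /=.
  apply: eq_big => [j|j ji]; first by [].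
  rewrite !hornerXsubC /xs /Fq.
  by rewrite -mulrBl invf_div sub0r mulrN mulrC mulrA mulfVK // -mulrN -invrN opprB.
have Ls : \sum_(i < d.+1) `|Lc i| <= fr R 4 3.
  apply: le_trans (sum_bound R d); rewrite big_mkord le_eqVlt; apply/orP; left; apply/eqP.
  by apply: eq_bigr => i0 _; rewrite /Lc big_mkord.
have Ls0 : 0 <= \sum_(i < d.+1) `|Lc i| by apply: sumr_ge0 => i _.
set M := `|p.@[toR R u]| in hi.
have bi : forall i : 'I_d.+1, `|Psi (xs i)| <= M / 6%:R + 3^-1.
  move=> i.
  have til : (tnd R i <= m%:R)%R.
    rewrite /tnd ler_nat; have := ltn_ord i; rewrite ltnS => id.
    have : (i ^ 2 <= d ^ 2)%N by rewrite leq_exp2r.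
    move: big; lia.
  have ti5 : (5 <= tnd R i)%R by rewrite /tnd ler_nat leq_addr.
  have mpos : (0 < m%:R :> R) by rewrite ltr0n.
  have hx : 0 <= xs i <= 1.
    rewrite /xs divr_ge0 ?ler0n //= ler_pdivrMr // mul1r //.
  have mx : m%:R * xs i = tnd R i by rewrite /xs mulrC divfK.
  have hb := bern m hx; rewrite mx in hb.
  have c0 : 0 <= (1 - xs i) ^+ m.
    by rewrite exprn_ge0 // subr_ge0; case/andP: hx.
  have c6 : (1 - xs i) ^+ m * 6%:R <= 1.
    apply: le_trans hb; apply: ler_wpM2l => //; move: ti5; lra.
  have near := Psi_near hx.
  have : `|Psi (xs i)| <= `|Psi (xs i) - (1 - xs i) ^+ m * p.@[toR R u]| + (1 - xs i) ^+ m * M.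
    have t := ler_normD (Psi (xs i) - (1 - xs i) ^+ m * p.@[toR R u]) ((1 - xs i) ^+ m * p.@[toR R u]).
    by rewrite subrK normrM (ger0_norm c0) in t.
  move=> tri; have M0 : 0 <= M := normr_ge0 _.
  nra.
have : M <= (M / 6%:R + 3^-1) * \sum_(i < d.+1) `|Lc i|.
  rewrite /M {1}e0; apply: le_trans (ler_norm_sum _ _ _) _.
  rewrite mulr_sumr; apply: ler_sum => i _; rewrite normrM.
  by apply: ler_wpM2r => //; exact: bi.
move: Ls Ls0 hi; rewrite /fr; set S := \sum_(i < d.+1) _.
move=> *; nra.
Qed.

End Block.

Lemma Ndeg_cases (R : realType) n (g : cube n -> bool) :
  Ndeg R g = n \/ Nwitness R g (Ndeg R g).
Proof.
rewrite /Ndeg; apply: (big_ind (fun v => v = n \/ Nwitness R g v)).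
- by left.
- by move=> x y hx hy; rewrite /minn; case: ifP.
by move=> i /asboolP h; right.
Qed.

Lemma Nwit_mono (R : realType) n (g : cube n -> bool) a b :
  (a <= b)%N -> Nwitness R g a -> Nwitness R g b.
Proof.
move=> ab [q [hq rest]]; exists q; split => //.
by apply: leq_trans hq _.
Qed.

Section NP.
Local Open Scope ring_scope.
Lemma Nwit_pos (R : realType) n (f : cube n -> bool) :
  nonconstant f -> Nwitness R f 0 -> False.
Proof.
move=> [x [y nxy]] [q [hq [hlo hhi]]].
have e := msize1_polyC hq.
have ev : forall v, q.@[v] = q@_0 by move=> v; rewrite {1}e mevalC.
case hx: (f x); case hy: (f y); rewrite ?hx ?hy // in nxy.
- have := hhi _ hx; have := hlo _ hy; rewrite !ev; lra.
- have := hhi _ hy; have := hlo _ hx; rewrite !ev; lra.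
Qed.
End NP.

Lemma certx_le n (f : cube n -> bool) x : (certx f x <= n)%N.
Proof.
rewrite /certx; apply: (big_ind (fun v => v <= n)%N) => //.
- by move=> a b ha hb; rewrite geq_min ha.
by move=> S _; apply: leq_trans (max_card _) _; rewrite card_ord.
Qed.

Lemma FB_lemma (R : realType) n (f : cube n -> bool) D :
  Nwitness R f D -> Nwitness R (negf f) D ->
  forall (u : cube n) (W : {set 'I_n}),
  (forall x : cube n, (forall i, i \notin W -> x i = u i) -> x != u -> f x != f u) ->
  (#|W| <= 4 + 100 * D ^ 2)%N.
Proof.
move=> [p [hp [hlo hhi]]] [q [hq [qlo qhi]]] u W hW.
case hu: (f u).
  apply: (block_bound (g := f) hp hlo (u := u)) => [x xo nxu|]; last exact: hhi.
  by have := hW x xo nxu; rewrite hu; case: (f x).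
apply: (block_bound (g := negf f) hq qlo (u := u)) => [x xo nxu|]; last first.
  by apply: qhi; rewrite /negf hu.
by have := hW x xo nxu; rewrite /negf hu; case: (f x).
Qed.

Theorem theorem3p10 :
  exists c : nat, forall (R : realType) (n : nat) (f : cube n -> bool) (k : nat),
    nonconstant f -> zebra f -> alt f = k -> (1 <= k)%N ->
    (certC f <= c * (alt f * maxn (Ndeg R f ^ 2) (Ndeg R (negf f) ^ 2)))%N.
Proof.
exists 104 => R n f k ncf zf ak k1.
set a := Ndeg R f; set b := Ndeg R (negf f).
set D := maxn a b.
have Dsq : (D ^ 2 <= maxn (a ^ 2) (b ^ 2))%N.
  rewrite /D /maxn; case: ifP => _; by rewrite ?leq_maxl ?leq_maxr.
have alt1 : (1 <= alt f)%N by rewrite ak.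
suff : (certC f <= 104 * (alt f * D ^ 2))%N.
  move/leq_trans; apply; rewrite leq_mul2l leq_mul2l Dsq; by rewrite !orbT.
have [ha|wa] := Ndeg_cases R f; last have [hb|wb] := Ndeg_cases R (negf f).
- have nD : (n <= D)%N by rewrite /D /a ha leq_maxl.
  apply/bigmax_leqP => x _; apply: leq_trans (certx_le f x) _.
  apply: leq_trans nD _; apply: leq_trans (_ : D <= D ^ 2)%N _.
    by case: (posnP D) => [->|D0] //; rewrite expnS expn1 leq_pmulr.
  by rewrite mulnA; apply: leq_pmull; rewrite muln_gt0 alt1.
- have nD : (n <= D)%N by rewrite /D /b hb leq_maxr.
  apply/bigmax_leqP => x _; apply: leq_trans (certx_le f x) _.
  apply: leq_trans nD _; apply: leq_trans (_ : D <= D ^ 2)%N _.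
    by case: (posnP D) => [->|D0] //; rewrite expnS expn1 leq_pmulr.
  by rewrite mulnA; apply: leq_pmull; rewrite muln_gt0 alt1.
have wa' : Nwitness R f D by apply: Nwit_mono wa; exact: leq_maxl.
have wb' : Nwitness R (negf f) D by apply: Nwit_mono wb; exact: leq_maxr.
have D1 : (1 <= D)%N.
  case: (posnP a) => [a0|]; last by move=> a0; apply: leq_trans a0 (leq_maxl _ _).
  by exfalso; apply: (Nwit_pos (R := R) ncf); rewrite -a0.
apply/bigmax_leqP => x _.
apply: leq_trans (cert_bound zf (FB_lemma wa' wb') x) _.
have : (4 + 100 * D ^ 2 <= 104 * D ^ 2)%N.
  have : (1 <= D ^ 2)%N by rewrite expn_gt0 D1.
  lia.
move=> h; rewrite mulnCA leq_mul2l h orbT //.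
Qed.
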